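(* Let $f:M'\twoheadleftarrow M$ be a matroid quotient on a ground set $E$ with $n_f(E)=c$, and let $M'=M_0\overset{\mathcal K_1}{\twoheadleftarrow}M_1\overset{\mathcal K_2}{\twoheadleftarrow}\cdots\overset{\mathcal K_c}{\twoheadleftarrow}M_c=M$ be its Higgs factorization. Then for each $i=1,\dots,c$, \[\mathcal K_i=\{G\in\mathscr L_{M_i} : G\supseteq F \text{ for some } F\in\operatorname{cyc}(f) \text{ with } n_f(F)\ge i\}.\] In particular, the quotient $f$ (i.e. the matroid $M'$) is determined by $M$, the set $\operatorname{cyc}(f)$ of $f$-cyclic flats, and their $f$-nullities.
   Context: $M'$ is a (matroid) quotient of $M$, written $f:M'\twoheadleftarrow M$, if every flat of $M'$ is a flat of $M$. The $f$-nullity of $A\subseteq E$ is $n_f(A)=\operatorname{rk}_M(A)-\operatorname{rk}_{M'}(A)$. An $f$-cyclic flat is a flat $F$ of $M'$ that is minimal under inclusion among flats $F'$ of $M'$ with $n_f(F')=n_f(F)$; $\operatorname{cyc}(f)$ is the set of these. A modular cut $\mathcal K$ of a matroid $N$ is a nonempty upward-closed set of flats such that $F_1,F_2\in\mathcal K$ with $\operatorname{rk}(F_1)+\operatorname{rk}(F_2)=\operatorname{rk}(F_1\cup F_2)+\operatorname{rk}(F_1\cap F_2)$ implies $F_1\cap F_2\in\mathcal K$; it defines an elementary quotient $N'\overset{\mathcal K}{\twoheadleftarrow}N$ whose flats are $\mathcal K$ together with the flats of $N$ not covered by an element of $\mathcal K$. The Higgs factorization of $f$ is the sequence of elementary quotients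 in which $M_i$ ($1\le i\le c$) has bases $\{A\subseteq E: A \text{ spanning in } M',\ \text{independent in } M,\ |A|=\operatorname{rk}(M')+i\}$, and $\mathcal K_i$ is the modular cut of $M_i$ defining the elementary quotient $M_{i-1}$ of $M_i$. *)

(* Defs.v *)
From mathcomp Require Import all_boot.
Set Implicit Arguments. Unset Strict Implicit. Unset Printing Implicit Defensive.

Section Matroids.
Variable T : finType.

Record matroid := Matroid {
  indep : {set T} -> bool;
  indep_set0 : indep set0;
  indep_sub : forall A B : {set T}, A \subset B -> indep B -> indep A;
  indep_aug : forall A B : {set T}, indep A -> indep B -> #|A| < #|B| ->
                exists2 x, x \in B :\: A & indep (x |: A)
}.

(* Rank, flats etc. are defined for an arbitrary family I of "independent"
   sets, so that they can also be applied to families (like the Higgs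
   matroids M_i) that are given by a set of bases. *)
Definition rk (I : {set T} -> bool) (A : {set T}) : nat :=
  \max_(B : {set T} | (B \subset A) && I B) #|B|.

Definition flat (I : {set T} -> bool) (F : {set T}) : bool :=
  [forall x, (x \notin F) ==> (rk I F < rk I (x |: F))].

Definition quotient (M' M : matroid) : Prop :=
  forall F, flat (indep M') F -> flat (indep M) F.

Definition nullity (M' M : matroid) (A : {set T}) : nat :=
  rk (indep M) A - rk (indep M') A.

Definition f_cyclic (M' M : matroid) (F : {set T}) : bool :=
  flat (indep M') F &&
  ~~ [exists F' : {set T}, [&& flat (indep M') F', F' \proper F &
                             nullity M' M F' == nullity M' M F]].

Definition cyc (M' M : matroid) : {set {set T}} := [set F | f_cyclic M' M F].

Definition higgs_basis (M' M : matroid) (i : nat) (A : {set T}) : bool :=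
  [&& rk (indep M') A == rk (indep M') setT, indep M A &
      #|A| == rk (indep M') setT + i].

Definition higgs_indep (M' M : matroid) (i : nat) (A : {set T}) : bool :=
  [exists B : {set T}, (A \subset B) && higgs_basis M' M i B].

Definition modular_cut (I : {set T} -> bool) (K : {set {set T}}) : Prop :=
  [/\ K != set0,
      (forall F, F \in K -> flat I F),
      (forall F G, F \in K -> flat I G -> F \subset G -> G \in K) &
      (forall F1 F2, F1 \in K -> F2 \in K ->
         rk I F1 + rk I F2 = rk I (F1 :|: F2) + rk I (F1 :&: F2) ->
         F1 :&: F2 \in K)].

Definition covers (I : {set T} -> bool) (G F : {set T}) : bool :=
  [&& flat I F, flat I G, F \proper G &
      ~~ [exists H : {set T}, [&& flat I H, F \proper H & H \proper G]]].

Definition elem_quot_flat (I : {set T} -> bool) (K : {set {set T}})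
    (F : {set T}) : bool :=
  (F \in K) || (flat I F && ~~ [exists G in K, covers I G F]).

End Matroids.

(* Main.v *)
Require Import Defs.
From mathcomp Require Import all_boot zify.
Set Implicit Arguments. Unset Strict Implicit. Unset Printing Implicit Defensive.

Section Gen.
Variable T : finType.
Implicit Types A B S X F G : {set T}.

Lemma set_ind (P : {set T} -> Prop) : P set0 ->
  (forall x X, x \notin X -> P X -> P (x |: X)) -> forall X, P X.
Proof.
move=> P0 PS X; move H : #|X| => k; elim: k X H => [|k IH] X H.
  by move/eqP: H; rewrite cards_eq0 => /eqP ->.
have /set0Pn [x xX] : X != set0 by rewrite -cards_eq0 H.
rewrite -(setD1K xX); apply: PS; first by rewrite !inE eqxx.
by apply: IH; move: H; rewrite (cardsD1 x X) xX; lia.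
Qed.

Lemma chain (R : {set T} -> {set T} -> Prop) :
  (forall A, R A A) -> (forall A B C, R A B -> R B C -> R A C) ->
  (forall A x, R A (x |: A)) -> forall A B, A \subset B -> R A B.
Proof.
move=> Rr Rt Rs A B sAB; rewrite -(setUidPr sAB).
elim/set_ind: B {sAB} => [|x X _ IH]; first by rewrite setU0.
by rewrite setUCA; apply: Rt IH (Rs _ _).
Qed.

Definition flatf (g : {set T} -> nat) F := [forall x, (x \notin F) ==> (g F < g (x |: F))].
Definition clf (g : {set T} -> nat) A := [set x | g (x |: A) == g A].
Definition gmono (g : {set T} -> nat) := forall A B, A \subset B -> g A <= g B.
Definition gsub (g : {set T} -> nat) := forall A B, g (A :|: B) + g (A :&: B) <= g A + g B.
Definition gunit (g : {set T} -> nat) := forall A x, g (x |: A) <= g A + 1.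

Lemma flatP g F : reflect (forall x, x \notin F -> g F < g (x |: F)) (flatf g F).
Proof. by apply: (iffP forallP) => H x; move: (H x) => //; move/implyP. Qed.

Section Clos.
Variable g : {set T} -> nat.
Hypothesis gm : gmono g.
Hypothesis gs : gsub g.

Lemma sub_cl A : A \subset clf g A.
Proof.
by apply/subsetP => x xA; rewrite inE; apply/eqP; congr g; apply/setUidPr; rewrite sub1set.
Qed.

Lemma cl_sub_flat A F : flatf g F -> A \subset F -> clf g A \subset F.
Proof.
move=> /flatP fF sAF; apply/subsetP => x; rewrite inE => /eqP e.
apply/negPn/negP => xF; have := fF x xF.
have := gs F (x |: A).
have -> : F :|: (x |: A) = x |: F by rewrite setUCA (setUidPl sAF).
have -> : F :&: (x |: A) = A.
  apply/setP => y; rewrite !inE; case yA: (y \in A).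
    by rewrite orbT andbT (subsetP sAF).
  rewrite orbF; case: eqP => [->|]; by rewrite ?(negbTE xF) ?andbF.
lia.
Qed.

Lemma g_cl A : g (clf g A) = g A.
Proof.
suff H : forall X, X \subset clf g A -> g (A :|: X) = g A.
  by rewrite -{1}(setUidPr (sub_cl A)) H.
elim/set_ind => [|x X _ IH] sX; first by rewrite setU0.
have xc : x \in clf g A by rewrite (subsetP sX) // !inE eqxx.
have sX' : X \subset clf g A by apply: subset_trans sX; apply: subsetUr.
move: xc; rewrite inE => /eqP ex; have eX := IH sX'.
have := gs (A :|: X) (x |: A).
have -> : A :|: X :|: (x |: A) = A :|: (x |: X).
  by apply/setP => y; rewrite !inE; case: (y == x); case: (y \in A); case: (y \in X).
have := gm (subsetUl A (x |: X)).
have sI : A \subset (A :|: X) :&: (x |: A) by rewrite subsetI subsetUl subsetUr.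
have := gm sI; lia.
Qed.

Lemma cl_flat A : flatf g (clf g A).
Proof.
apply/flatP => x; rewrite inE g_cl => ne.
have := gm (subsetUr [set x] A); have := gm (setUS [set x] (sub_cl A)).
move: ne; rewrite neq_ltn => /orP[]; lia.
Qed.

Lemma flat_lt H G : flatf g H -> H \proper G -> g H < g G.
Proof.
move=> /flatP fH /properP [sHG [x xG xH]].
apply: leq_trans (fH x xH) (gm _); by rewrite subUset sub1set xG sHG.
Qed.

Lemma flat_cap F1 F2 : flatf g F1 -> flatf g F2 -> flatf g (F1 :&: F2).
Proof.
move=> f1 f2.
have s1 := cl_sub_flat f1 (subsetIl F1 F2).
have s2 := cl_sub_flat f2 (subsetIr F1 F2).
have e : clf g (F1 :&: F2) = F1 :&: F2.
  by apply/eqP; rewrite eqEsubset subsetI s1 s2 sub_cl.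
by rewrite -e; apply: cl_flat.
Qed.

End Clos.
End Gen.

Section Rk.
Variable T : finType.
Implicit Types A B S X F G : {set T}.

Lemma rk_ge (I : {set T} -> bool) A B : B \subset A -> I B -> #|B| <= rk I A.
Proof. by move=> sBA IB; rewrite /rk; apply: (@leq_bigmax_cond _ _ (fun B : {set T} => #|B|) B); rewrite sBA IB. Qed.

Lemma rk_witness (I : {set T} -> bool) A : I set0 ->
  exists B, [/\ B \subset A, I B & #|B| = rk I A].
Proof.
move=> I0.
have [|B] := @eq_bigmax_cond _ [pred B : {set T} | (B \subset A) && I B] (fun B => #|B|).
  by apply/card_gt0P; exists set0; rewrite inE sub0set I0.
by rewrite inE => /andP[sBA IB] e; exists B; split => //; rewrite -e.
Qed.

Lemma rk_le_card (I : {set T} -> bool) A : I set0 -> rk I A <= #|A|.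
Proof. by move=> I0; have [B [sBA _ <-]] := rk_witness A I0; apply: subset_leq_card. Qed.

Lemma rk_mono (I : {set T} -> bool) A B : I set0 -> A \subset B -> rk I A <= rk I B.
Proof.
move=> I0 sAB; have [C [sCA IC <-]] := rk_witness A I0.
by apply: rk_ge => //; apply: subset_trans sAB.
Qed.


Variable M : matroid T.
Notation r := (rk (indep M)).
Notation ind := (indep M).

Lemma ind0 : ind set0. Proof. exact: indep_set0. Qed.

Lemma rk_indep A : ind A -> r A = #|A|.
Proof. by move=> iA; apply/eqP; rewrite eqn_leq rk_le_card ?ind0 ?rk_ge. Qed.

Lemma indep_rk A : r A = #|A| -> ind A.
Proof.
move=> e; have [B [sBA iB eB]] := rk_witness A ind0.
suff -> : A = B by [].
by apply/eqP; rewrite eq_sym eqEcard sBA eB e leqnn.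
Qed.

Lemma indepE A : ind A = (r A == #|A|).
Proof. by apply/idP/eqP; [apply: rk_indep | apply: indep_rk]. Qed.

Lemma rk_unit A x : r (x |: A) <= r A + 1.
Proof.
have [B [sB iB <-]] := rk_witness (x |: A) ind0.
have sB' : B :\ x \subset A.
  apply/subsetP => y; rewrite !inE => /andP[nyx yB].
  by move: (subsetP sB y yB); rewrite !inE (negbTE nyx).
have := rk_ge sB' (indep_sub (subsetDl B [set x]) iB).
by rewrite (cardsD1 x B); case: (x \in B) => /=; lia.
Qed.

Lemma augment S X : ind S -> S \subset X -> #|S| < r X ->
  exists2 y, y \in X :\: S & ind (y |: S).
Proof.
move=> iS sSX lt; have [B [sBX iB eB]] := rk_witness X ind0.
have lt' : #|S| < #|B| by rewrite eB.
have [y yBS iyS] := indep_aug iS iB lt'.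
exists y; last by []. move: yBS; rewrite !inE => /andP[-> yB]; by rewrite (subsetP sBX).
Qed.

Lemma extend S X : ind S -> S \subset X ->
  exists S', [/\ S \subset S', S' \subset X, ind S' & #|S'| = r X].
Proof.
move=> iS sSX; move H : (r X - #|S|) => k; elim: k S iS sSX H => [|k IH] S iS sSX H.
  exists S; split => //; apply/eqP; rewrite eqn_leq rk_ge //=; lia.
have [|y yXS iyS] := augment iS sSX; first lia.
move: yXS; rewrite inE => /andP[yS yX].
have h1 : y |: S \subset X by rewrite subUset sub1set yX sSX.
have h2 : r X - #|y |: S| = k by rewrite cardsU1 yS; lia.
have [S' [s1 s2 s3 s4]] := IH (y |: S) iyS h1 h2.
by exists S'; split => //; apply: subset_trans s1; apply: subsetUr.
Qed.

Lemma rk_submod A B : r (A :|: B) + r (A :&: B) <= r A + r B.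
Proof.
have [B0 [s0 i0 e0]] := rk_witness (A :&: B) ind0.
have sIU : A :&: B \subset A :|: B by apply: subset_trans (subsetIl _ _) (subsetUl _ _).
have [B1 [s01 s1 i1 e1]] := extend i0 (subset_trans s0 sIU).
have hA := rk_ge (subsetIr B1 A) (indep_sub (subsetIl B1 A) i1).
have hB := rk_ge (subsetIr B1 B) (indep_sub (subsetIl B1 B) i1).
rewrite (setIC B1 A) (setIC B1 B) in hA hB.
have hAB : B0 \subset (A :&: B1) :&: (B :&: B1).
  by rewrite subsetI !subsetI s01 (subset_trans s0 (subsetIl _ _)) (subset_trans s0 (subsetIr _ _)).
have := subset_leq_card hAB.
have := cardsUI (A :&: B1) (B :&: B1).
have : (A :&: B1) :|: (B :&: B1) = B1.
  by rewrite -setIUl; apply/setIidPr.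
move=> ->; lia.
Qed.

End Rk.

Section Quot.
Variable T : finType.
Implicit Types A B S X F G : {set T}.
Variables M' M : matroid T.
Hypothesis Hq : quotient M' M.
Notation r := (rk (indep M)).
Notation r' := (rk (indep M')).
Notation n := (nullity M' M).

Lemma rk_gm (N : matroid T) : gmono (rk (indep N)).
Proof. by move=> A B; apply: rk_mono; apply: indep_set0. Qed.
Lemma rk_gs (N : matroid T) : gsub (rk (indep N)).
Proof. by move=> A B; apply: rk_submod. Qed.
Lemma rk_gu (N : matroid T) : gunit (rk (indep N)).
Proof. by move=> A x; apply: rk_unit. Qed.

Lemma Q1 A y : r (y |: A) = r A -> r' (y |: A) = r' A.
Proof.
move=> e.
have fl : flat (indep M) (clf r' A) by apply: Hq; apply: cl_flat; [apply: rk_gm | apply: rk_gs].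
have := cl_sub_flat (rk_gs M) fl (@sub_cl _ r' A).
move/subsetP/(_ y); rewrite !inE e eqxx => /(_ isT).
by move/eqP.
Qed.

Lemma Q2 A B : A \subset B -> r' B + r A <= r B + r' A.
Proof.
apply: (chain (R := fun A B => r' B + r A <= r B + r' A)).
- by move=> *; lia.
- by move=> *; lia.
move=> C x; case: (eqVneq (r (x |: C)) (r C)) => [e|ne].
  by rewrite e (Q1 e); lia.
have := rk_gm M (subsetUr [set x] C); have := rk_unit M' C x.
move: ne; rewrite neq_ltn => /orP[]; lia.
Qed.

Lemma r0 (N : matroid T) : rk (indep N) set0 = 0.
Proof. by apply/eqP; rewrite -leqn0 -(cards0 T) rk_le_card // indep_set0. Qed.

Lemma rle A : r' A <= r A.
Proof. by have := Q2 (sub0set A); rewrite !r0; lia. Qed.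

Lemma n_mono A B : A \subset B -> n A <= n B.
Proof. by move=> sAB; have := Q2 sAB; have := rle A; have := rle B; rewrite /nullity; lia. Qed.

End Quot.

Definition gi (T : finType) (M' M : matroid T) i A := rk (indep M') A + minn (nullity M' M A) i.

Section Gi.
Variable T : finType.
Implicit Types A B S X F G : {set T}.
Variables M' M : matroid T.
Hypothesis Hq : quotient M' M.
Notation r := (rk (indep M)).
Notation r' := (rk (indep M')).
Notation n := (nullity M' M).
Variable i : nat.
Notation g := (gi M' M i).

Lemma gi_mono : gmono g.
Proof. move=> A B sAB; have := rk_gm M' sAB; have := n_mono Hq sAB; rewrite /gi; lia. Qed.

Lemma gi_unit : gunit g.
Proof.
move=> A x; have := rk_unit M' A x; have := rk_unit M A x.
have := rle Hq A; have := rle Hq (x |: A); rewrite /gi /nullity; lia.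
Qed.

Lemma gi_sub : gsub g.
Proof.
move=> A B; rewrite /gi /nullity.
have := rk_submod M' A B; have := rk_submod M A B.
have := Q2 Hq (subsetIl A B); have := Q2 Hq (subsetIr A B).
have := Q2 Hq (subsetUl A B); have := Q2 Hq (subsetUr A B).
have := rle Hq A; have := rle Hq B; have := rle Hq (A :|: B); have := rle Hq (A :&: B).
lia.
Qed.

End Gi.

Section Cyc.
Variable T : finType.
Implicit Types A B S X F G : {set T}.
Variables M' M : matroid T.
Hypothesis Hq : quotient M' M.
Notation r := (rk (indep M)).
Notation r' := (rk (indep M')).
Notation n := (nullity M' M).

Lemma cyc_exists G : flat (indep M') G ->
  exists F, [/\ F \in cyc M' M, F \subset G & n F = n G].
Proof.
move: {2}#|G| (leqnn #|G|) => k; elim: k G => [|k IH] G.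
  rewrite leqn0 cards_eq0 => /eqP -> f0; exists set0; split => //.
  rewrite inE /f_cyclic f0 /=; apply/existsP => [[F /and3P[_ /properP [_ [x]]]]].
  by rewrite inE.
move=> le fG; case cG: (f_cyclic M' M G).
  by exists G; split; rewrite ?inE.
move: cG; rewrite /f_cyclic fG /= => /negbFE /existsP [F /and3P [fF pFG /eqP e]].
have [|F0 [c0 s0 e0]] := IH F _ fF.
  by move: pFG; rewrite properEcard => /andP[_]; lia.
by exists F0; split => //; [apply: subset_trans s0 (proper_sub pFG) | rewrite e0 e].
Qed.

Lemma Elem i G : flatf (gi M' M i) G ->
  (i <= n G) = [exists F in cyc M' M, (i <= nullity M' M F) && (F \subset G)].
Proof.
move=> fG; apply/idP/existsP => [le|[F /and3P [cF le sFG]]]; last first.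
  by apply: leq_trans le (n_mono Hq sFG).
have fG' : flat (indep M') G.
  apply/flatP => x xG; move/flatP: fG => /(_ x xG); rewrite /gi.
  have := rle Hq G; have := rle Hq (x |: G); rewrite /nullity in le *; lia.
have [F [cF sFG e]] := cyc_exists fG'.
by exists F; rewrite cF sFG e le.
Qed.

End Cyc.

Section Higgs.
Variable T : finType.
Implicit Types A B S X F G : {set T}.
Variables M' M : matroid T.
Hypothesis Hq : quotient M' M.
Notation r := (rk (indep M)).
Notation r' := (rk (indep M')).
Notation n := (nullity M' M).
Variable i : nat.

Lemma greedy A S0 : S0 \subset A -> indep M S0 -> #|S0| <= r' S0 + i ->
  exists S, [/\ S0 \subset S, S \subset A, indep M S, #|S| <= r' S + i &
                #|S| = minn (r A) (r' A + i)].
Proof.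
move H : (minn (r A) (r' A + i) - #|S0|) => k.
elim: k S0 H => [|k IH] S0 H sA iS le.
  exists S0; split => //.
  have := rk_ge sA iS; have := rk_gm M' sA; lia.
have eS0 := rk_indep iS.
suff [y [yA yS iy le']] : exists y, [/\ y \in A, y \notin S0, indep M (y |: S0) &
                                     #|y |: S0| <= r' (y |: S0) + i].
  have h1 : y |: S0 \subset A by rewrite subUset sub1set yA sA.
  have h2 : minn (r A) (r' A + i) - #|y |: S0| = k by rewrite cardsU1 yS; lia.
  have [S [s1 s2 s3 s4 s5]] := IH _ h2 h1 iy le'.
  by exists S; split => //; apply: subset_trans s1; apply: subsetUr.
case: (boolP (A \subset clf r' S0)) => [sAc|].
  have := rk_gm M' sAc; rewrite (g_cl (rk_gm M') (rk_gs M')) => lA.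
  have [|y yAS iy] := augment iS sA.
    have := rk_gm M' sA; have := rk_ge sA iS; lia.
  move: yAS; rewrite inE => /andP[yS yA]; exists y; split => //.
  rewrite cardsU1 yS /=; have := rk_gm M' (subsetUr [set y] S0).
  have := rk_gm M' sA; lia.
case/subsetPn => y yA; rewrite inE => ne.
have yS : y \notin S0.
  by apply: contra ne => yS; apply/eqP; congr r'; apply/setUidPr; rewrite sub1set.
have nr : r (y |: S0) != r S0 by apply: contra ne => /eqP /(Q1 Hq) ->.
have := rk_unit M S0 y; have := rk_gm M (subsetUr [set y] S0).
have := rk_unit M' S0 y; have := rk_gm M' (subsetUr [set y] S0).
move: ne nr; rewrite !neq_ltn => /orP[] h1 /orP[] h2 *; try lia.
exists y; split => //.
  by apply: indep_rk; rewrite cardsU1 yS; lia.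
by rewrite cardsU1 yS; lia.
Qed.

Hypothesis Hc : i <= n setT.

Lemma higgsE B : higgs_indep M' M i B = indep M B && (#|B| <= r' B + i).
Proof.
apply/existsP/andP => [[S /andP[sBS /and3P[/eqP e1 iS /eqP e2]]]|[iB le]].
  split; first exact: indep_sub sBS iS.
  have eU : B :|: S :\: B = S by rewrite -{1}(setIidPr sBS) setID.
  have := rk_submod M' B (S :\: B); rewrite eU.
  have := rk_le_card (S :\: B) (indep_set0 M').
  have := cardsID B S; rewrite (setIidPr sBS).
  have := rk_gm M' (subsetT S); have := rk_gm M' (subsetT B); lia.
have [S [s1 _ s3 s4 s5]] := greedy (subsetT B) iB le.
exists S; rewrite s1 /higgs_basis s3 /=.
have := rk_gm M' (subsetT S); have := rle Hq setT; move: Hc; rewrite /nullity => Hc'.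
move=> h1 h2; apply/andP; split; apply/eqP; lia.
Qed.

Lemma rk_higgs A : rk (higgs_indep M' M i) A = gi M' M i A.
Proof.
apply/eqP; rewrite eqn_leq; apply/andP; split.
  apply/bigmax_leqP => B /andP[sBA]; rewrite higgsE => /andP[iB le].
  have := rk_ge sBA iB; have := rk_gm M' sBA; have := rle Hq A.
  rewrite /gi /nullity; lia.
have l0 : #|@set0 T| <= r' set0 + i by rewrite cards0.
have [S [_ s2 s3 s4 s5]] := greedy (sub0set A) (indep_set0 M) l0.
have : higgs_indep M' M i S by rewrite higgsE s3 s4.
move=> hS; have := rk_ge s2 hS; have := rle Hq A; rewrite /gi /nullity; lia.
Qed.

End Higgs.

Section Gi2.
Variable T : finType.
Implicit Types A B S X F G : {set T}.
Variables M' M : matroid T.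
Hypothesis Hq : quotient M' M.
Notation r' := (rk (indep M')).
Notation n := (nullity M' M).

Lemma cl_n i A : i <= n (clf (gi M' M i) A) -> i <= n A.
Proof.
move=> le; have := g_cl (gi_mono Hq i) (gi_sub Hq i) A.
have := rk_gm M' (@sub_cl _ (gi M' M i) A); move: le; rewrite /gi; lia.
Qed.

Lemma gi_hi i A : 0 < i -> i <= n A -> gi M' M i.-1 A + 1 = gi M' M i A.
Proof. by case: i => //= j; rewrite /gi; lia. Qed.

Lemma gi_lo i A : n A < i -> gi M' M i.-1 A = gi M' M i A.
Proof. by case: i => //= j; rewrite /gi; lia. Qed.

End Gi2.

Section Uniq.
Variable T : finType.
Implicit Types A B S X F G : {set T}.
Variable I : {set T} -> bool.

Lemma flatT : flat I setT.
Proof. by apply/forallP => x; rewrite inE. Qed.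

Lemma cover_exists F : flat I F -> F != setT -> exists G, covers I G F.
Proof.
move=> fF nT.
suff H : forall k G, #|G| <= k -> flat I G -> F \proper G -> exists G, covers I G F.
  by apply: (H _ setT (leqnn _) flatT); rewrite properT.
elim=> [|k IH] G le fG pFG.
  by move: pFG; rewrite properEcard => /andP[_]; lia.
case cG: (covers I G F); first by exists G.
have [H /and3P [fH pFH pHG]] : exists H, [&& flat I H, F \proper H & H \proper G].
  by apply/existsP; move: cG; rewrite /covers fF fG pFG /= => /negbFE.
apply: (IH H _ fH pFH); move: pHG le; rewrite properEcard => /andP[_]; lia.
Qed.

Lemma Kincl (K1 K2 : {set {set T}}) :
  (forall F, F \in K1 -> flat I F) ->
  (forall F G, F \in K1 -> flat I G -> F \subset G -> G \in K1) ->
  setT \in K2 ->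
  (forall F, elem_quot_flat I K1 F = elem_quot_flat I K2 F) ->
  K1 \subset K2.
Proof.
move=> f1 up1 T2 eq; apply/subsetP => F.
move: {2}#|~: F| (leqnn #|~: F|) => k; elim: k F => [|k IH] F le FK1.
  move: le; rewrite leqn0 cards_eq0 => /eqP e; by rewrite -(setCK F) e setC0.
apply/negPn/negP => FK2.
have nT : F != setT by apply: contra FK2 => /eqP ->.
have [G cG] := cover_exists (f1 _ FK1) nT.
have /and4P [_ fG pFG _] := cG.
have GK1 : G \in K1 by apply: up1 FK1 fG (proper_sub pFG).
have GK2 : G \in K2.
  apply: IH GK1; move: pFG; rewrite properEcard => /andP[_].
  have := cardsC F; have := cardsC G; lia.
have := eq F; rewrite /elem_quot_flat FK1 (negbTE FK2) /=.
have -> : [exists G0 in K2, covers I G0 F] by apply/existsP; exists G; rewrite GK2 cG.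
by rewrite andbF.
Qed.

End Uniq.

Section Main.
Variable T : finType.
Implicit Types A B S X F G : {set T}.
Variables M' M : matroid T.
Hypothesis Hq : quotient M' M.
Notation r' := (rk (indep M')).
Notation n := (nullity M' M).
Variable i : nat.
Hypothesis Hi : 0 < i.
Hypothesis Hc : i <= n setT.
Notation I := (higgs_indep M' M i).
Notation J := (higgs_indep M' M i.-1).

Lemma HI A : rk I A = gi M' M i A. Proof. exact: rk_higgs. Qed.
Lemma HJ A : rk J A = gi M' M i.-1 A.
Proof. by apply: rk_higgs => //; apply: leq_trans Hc; apply: leq_pred. Qed.

Lemma gmI : gmono (rk I). Proof. by move=> A B s; rewrite !HI; apply: gi_mono. Qed.
Lemma gsI : gsub (rk I). Proof. by move=> A B; rewrite !HI; apply: gi_sub. Qed.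

Lemma flatIE F : flat I F = flatf (gi M' M i) F.
Proof. by apply: eq_forallb => x; rewrite !HI. Qed.

Lemma clIE A : clf (rk I) A = clf (gi M' M i) A.
Proof. by apply/setP => x; rewrite !inE !HI. Qed.

Definition Kn := [set G | flat I G && (i <= n G)].

Lemma Kstar_eq :
  [set G : {set T} | flat I G &&
     [exists F in cyc M' M, (i <= nullity M' M F) && (F \subset G)]] = Kn.
Proof.
apply/setP => G; rewrite !inE; case fG: (flat I G) => //=.
by rewrite (Elem Hq) // -flatIE.
Qed.

Lemma quot_flats F : elem_quot_flat I Kn F = flat J F.
Proof.
have hi A : i <= n A -> rk J A + 1 = rk I A by move=> le; rewrite HI HJ gi_hi.
have lo A : n A < i -> rk J A = rk I A by move=> lt; rewrite HI HJ gi_lo.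
have gu A x : rk I (x |: A) <= rk I A + 1 by rewrite !HI; apply: gi_unit.
rewrite /elem_quot_flat inE.
case fF : (flat I F) => /=; last first.
  apply/esym/negbTE; apply/negP => /flatP fJ.
  move/negbT: fF => /forallPn [x]; rewrite negb_imply => /andP [xF]; rewrite -leqNgt => le.
  have := fJ x xF; have := gmI (subsetUr [set x] F).
  have := n_mono Hq (subsetUr [set x] F).
  case: (leqP i (n (x |: F))) => h1; case: (leqP i (n F)) => h2.
  - have := hi _ h1; have := hi _ h2; lia.
  - have := hi _ h1; have := lo _ h2; lia.
  - lia.
  - have := lo _ h1; have := lo _ h2; lia.
case nF: (i <= n F) => /=.
  apply/esym/flatP => x xF; move/flatP: fF => /(_ x xF).
  have := hi F nF; have := hi (x |: F) (leq_trans nF (n_mono Hq (subsetUr [set x] F))); lia.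
have ltF : n F < i by rewrite ltnNge nF.
apply/idP/idP.
  move=> ncov; apply/flatP => x xF.
  case: (leqP i (n (x |: F))) => nx; last first.
    by rewrite (lo _ ltF) (lo _ nx); move/flatP: fF; apply.
  exfalso; move/negP: ncov; apply; apply/existsP; exists (clf (rk I) (x |: F)).
  have sC := @sub_cl _ (rk I) (x |: F).
  have fC : flat I (clf (rk I) (x |: F)) := cl_flat gmI gsI _.
  rewrite inE fC /= (leq_trans nx (n_mono Hq sC)) /=.
  rewrite /covers fF fC /=; apply/andP; split.
    apply/properP; split; first by apply: subset_trans sC; apply: subsetUr.
    by exists x => //; apply: (subsetP sC); rewrite !inE eqxx.
  apply/existsP => [[H /and3P [fH pFH pHC]]].
  have := flat_lt gmI fF pFH; have := flat_lt gmI fH pHC.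
  rewrite (g_cl gmI gsI); have := gu F x; lia.
move=> fJ; apply/existsP => [[G /andP [GK cGF]]].
move: GK; rewrite inE => /andP [fG nG].
move: cGF => /and4P [_ _ pFG nH].
move: (pFG) => /properP [sFG [x xG xF]].
have sxG : x |: F \subset G by rewrite subUset sub1set xG sFG.
have sC := cl_sub_flat gsI fG sxG.
have sC' := @sub_cl _ (rk I) (x |: F).
have eCG : clf (rk I) (x |: F) = G.
  apply/eqP; rewrite eqEsubset sC /=; apply/negP => nGC.
  move/negP: nH; apply; apply/existsP; exists (clf (rk I) (x |: F)).
  have fC : flat I (clf (rk I) (x |: F)) := cl_flat gmI gsI _.
  rewrite fC /=; apply/andP; split; last by rewrite properE sC; apply/negP.
  apply/properP; split; first by apply: subset_trans sC'; apply: subsetUr.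
  by exists x => //; apply: (subsetP sC'); rewrite !inE eqxx.
have nx : i <= n (x |: F).
  by apply: (cl_n Hq); rewrite -clIE eCG.
move/flatP: fJ => /(_ x xF).
have := hi _ nx; have := lo _ ltF; have := gu F x; lia.
Qed.

Lemma Kn_modcut : modular_cut I Kn.
Proof.
split.
- by apply/set0Pn; exists setT; rewrite inE flatT Hc.
- by move=> F; rewrite inE => /andP[].
- move=> F G; rewrite !inE => /andP[_ nF] fG sFG.
  by rewrite fG (leq_trans nF (n_mono Hq sFG)).
move=> F1 F2; rewrite !inE => /andP[f1 n1] /andP[f2 n2] e.
have -> : flat I (F1 :&: F2) := flat_cap gmI gsI f1 f2.
move: e; rewrite !HI /gi.
have := rk_submod M' F1 F2; have := n_mono Hq (subsetUl F1 F2); lia.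
Qed.

Lemma part1 K :
  (modular_cut I K /\ (forall F, elem_quot_flat I K F = flat J F)) <->
  K = [set G : {set T} | flat I G &&
     [exists F in cyc M' M, (i <= nullity M' M F) && (F \subset G)]].
Proof.
rewrite Kstar_eq; split; last first.
  by move=> ->; split; [apply: Kn_modcut | apply: quot_flats].
move=> [[K0 Kf Kup Kmod] Heq].
apply/eqP; rewrite eqEsubset; apply/andP; split.
  apply: (@Kincl _ I) => //; first by rewrite /Kn inE flatT Hc.
  by move=> F; rewrite Heq quot_flats.
apply: (@Kincl _ I).
- by move=> F; rewrite /Kn inE => /andP[].
- move=> F G; rewrite /Kn !inE => /andP[_ nF] fG sFG.
  by rewrite fG (leq_trans nF (n_mono Hq sFG)).
- have /set0Pn [F FK] := K0; by apply: Kup FK (flatT _) (subsetT F).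
by move=> F; rewrite Heq quot_flats.
Qed.

End Main.

Section Part2.
Variable T : finType.
Implicit Types A B S X F G : {set T}.
Variables N' M' M : matroid T.
Hypothesis Hq : quotient M' M.
Hypothesis HqN : quotient N' M.
Hypothesis Hcyc : cyc N' M = cyc M' M.
Hypothesis Hn : forall F, F \in cyc M' M -> nullity N' M F = nullity M' M F.

Lemma same_c : nullity N' M setT = nullity M' M setT.
Proof.
have [F [cF _ eF]] := @cyc_exists _ M' M setT (flatT _).
have [F' [cF' _ eF']] := @cyc_exists _ N' M setT (flatT _).
have := n_mono HqN (subsetT F); have := n_mono Hq (subsetT F').
rewrite -Hn // in eF; rewrite Hcyc in cF'; rewrite Hn // in eF'.
lia.
Qed.

Lemma ncl (N0 : matroid T) (H0 : quotient N0 M) i A :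
  (i <= nullity N0 M A) =
  [exists F in cyc N0 M, (i <= nullity N0 M F) && (F \subset clf (gi N0 M i) A)].
Proof.
rewrite -(Elem H0); last by apply: cl_flat; [apply: gi_mono | apply: gi_sub].
apply/idP/idP; last by apply: (cl_n H0).
by move=> le; apply: leq_trans le (n_mono H0 (@sub_cl _ (gi N0 M i) A)).
Qed.

Lemma gi_eq k : k <= nullity M' M setT -> forall A,
  gi N' M (nullity M' M setT - k) A = gi M' M (nullity M' M setT - k) A.
Proof.
set c := nullity M' M setT.
elim: k => [|k IH] le A.
  rewrite subn0 /c /gi.
  have := n_mono HqN (subsetT A); have := n_mono Hq (subsetT A).
  have := rle HqN A; have := rle Hq A; rewrite same_c /nullity; lia.
have IH' := IH (ltnW le).
set i := c - k in IH'.
have Hi : 0 < i by rewrite /i; lia.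
have -> : c - k.+1 = i.-1 by rewrite /i; lia.
have eqv : (i <= nullity N' M A) = (i <= nullity M' M A).
  rewrite (ncl HqN) (ncl Hq) Hcyc.
  have -> : clf (gi N' M i) A = clf (gi M' M i) A by apply/setP => x; rewrite !inE !IH'.
  apply: eq_existsb => F; case cF: (F \in cyc M' M) => //=; by rewrite Hn.
case: (leqP i (nullity M' M A)) => h.
  have h' : i <= nullity N' M A by rewrite eqv.
  have := gi_hi Hi h; have := gi_hi Hi h'; have := IH' A; lia.
have h' : nullity N' M A < i by rewrite ltnNge eqv -ltnNge.
by rewrite (gi_lo h) (gi_lo h') IH'.
Qed.

Lemma part2 A : indep N' A = indep M' A.
Proof.
have := gi_eq (leqnn _) A; rewrite subnn /gi !minn0 !addn0 => e.
by rewrite !indepE e.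
Qed.

End Part2.

Unset Implicit Arguments.

Theorem proposition3p23 (T : finType) (M' M : matroid T) (c : nat) :
  quotient M' M ->
  nullity M' M setT = c ->
  (forall i : nat, 1 <= i <= c ->
     forall K : {set {set T}},
       (modular_cut (higgs_indep M' M i) K /\
        (forall F : {set T},
           elem_quot_flat (higgs_indep M' M i) K F =
           flat (higgs_indep M' M i.-1) F))
       <->
       K = [set G : {set T} | flat (higgs_indep M' M i) G &&
              [exists F in cyc M' M, (i <= nullity M' M F) && (F \subset G)]])
  /\
  (forall N' : matroid T, quotient N' M ->
     cyc N' M = cyc M' M ->
     (forall F, F \in cyc M' M -> nullity N' M F = nullity M' M F) ->
     forall A : {set T}, indep N' A = indep M' A).
Proof.
move=> Hq Hc; split.
  move=> i /andP [Hi Hic] K.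
  have Hc' : i <= nullity M' M setT by rewrite Hc.
  exact: (part1 Hq Hi Hc' K).
by move=> N' HqN Hcyc Hn A; apply: (part2 Hq HqN Hcyc Hn).
Qed.
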